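(* For every locally finite group $G$ there are a locally finite group $G^+$ containing $G$ as a subgroup and an element $a \in G^+$ such that: $G^+ = \langle G \cup \{a\}\rangle_{G^+}$; $a$ does not commute with any $b \in G \setminus \{e_G\}$; $a$ has order $2$; and the subgroups $G$ and $a^{-1}Ga$ commute elementwise in $G^+$.
   Context: A group is locally finite if every finitely generated subgroup is finite. *)

(* Defs.v *)
From Stdlib Require Import List.

Record Grp := {
  carrier :> Type;
  gmul : carrier -> carrier -> carrier;
  gone : carrier;
  ginv : carrier -> carrier;
  gassoc : forall x y z, gmul x (gmul y z) = gmul (gmul x y) z;
  gmul1g : forall x, gmul gone x = x;
  gmulVg : forall x, gmul (ginv x) x = gone
}.

Arguments gmul {g} _ _.
Arguments gone {g}.
Arguments ginv {g} _.

Inductive generated (G : Grp) (S : G -> Prop) : G -> Prop :=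
| gen_in : forall x, S x -> generated G S x
| gen_one : generated G S gone
| gen_mul : forall x y, generated G S x -> generated G S y -> generated G S (gmul x y)
| gen_inv : forall x, generated G S x -> generated G S (ginv x).
Arguments generated {G} S _.

Definition finite_subset {T : Type} (P : T -> Prop) : Prop :=
  exists l : list T, forall x, P x -> In x l.

Definition locally_finite (G : Grp) : Prop :=
  forall l : list G, finite_subset (generated (fun x => In x l)).

Definition is_hom {G H : Grp} (f : G -> H) : Prop :=
  forall x y, f (gmul x y) = gmul (f x) (f y).

(* Main.v *)
Require Import Defs.
From Stdlib Require Import List Bool.
Import ListNotations.

Section W.
Variable G : Grp.

Lemma mulgV (x : G) : gmul x (ginv x) = gone.
Proof.
  rewrite <- (gmul1g G (gmul x (ginv x))).
  rewrite <- (gmulVg G (ginv x)) at 1.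
  rewrite <- gassoc. rewrite (gassoc G (ginv x) x (ginv x)), gmulVg, gmul1g.
  apply gmulVg.
Qed.

Lemma mulg1 (x : G) : gmul x gone = x.
Proof. rewrite <- (gmulVg G x), gassoc, mulgV, gmul1g. reflexivity. Qed.

Lemma invg1 : ginv (gone : G) = gone.
Proof. rewrite <- (gmul1g G (ginv gone)). apply mulgV. Qed.

Definition wmul (p q : G * G * bool) : G * G * bool :=
  match p, q with ((x1,y1),s), ((x2,y2),t) =>
    if s then ((gmul x1 y2, gmul y1 x2), negb t) else ((gmul x1 x2, gmul y1 y2), t) end.
Definition wone : G * G * bool := ((gone, gone), false).
Definition winv (p : G * G * bool) : G * G * bool :=
  match p with ((x,y),s) => if s then ((ginv y, ginv x), true) else ((ginv x, ginv y), false) end.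

Lemma wassoc x y z : wmul x (wmul y z) = wmul (wmul x y) z.
Proof.
  destruct x as [[x1 x2] s]; destruct y as [[y1 y2] t]; destruct z as [[z1 z2] r].
  destruct s, t, r; simpl; rewrite !gassoc; reflexivity.
Qed.
Lemma wmul1 x : wmul wone x = x.
Proof. destruct x as [[x1 x2] s]; simpl; rewrite !gmul1g; reflexivity. Qed.
Lemma wmulV x : wmul (winv x) x = wone.
Proof. destruct x as [[x1 x2] s]; destruct s; simpl; rewrite !gmulVg; reflexivity. Qed.

Definition W : Grp := {| carrier := G * G * bool; gmul := wmul; gone := wone; ginv := winv;
  gassoc := wassoc; gmul1g := wmul1; gmulVg := wmulV |}.

Definition emb (g : G) : W := ((g, gone), false).
Definition aa : W := ((gone, gone), true).
End W.

Theorem claim2p18 :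
  forall G : Grp, locally_finite G ->
  exists (Gp : Grp) (f : G -> Gp) (a : Gp),
    is_hom f /\ (forall x y, f x = f y -> x = y) /\
    locally_finite Gp /\
    (forall x : Gp, generated (fun y => (exists g, y = f g) \/ y = a) x) /\
    (forall b : G, b <> gone -> gmul a (f b) <> gmul (f b) a) /\
    a <> gone /\ gmul a a = gone /\
    (forall g h : G,
        gmul (f g) (gmul (ginv a) (gmul (f h) a)) =
        gmul (gmul (ginv a) (gmul (f h) a)) (f g)).
Proof.
  intros G HG. exists (W G), (emb G), (aa G).
  split; [| split; [| split; [| split; [| split; [| split; [| split]]]]]].
  - intros x y. unfold emb; simpl. rewrite gmul1g. reflexivity.
  - intros x y H. unfold emb in H. congruence.
  - intros l.
    set (L := flat_map (fun p : W G => [fst (fst p); snd (fst p)]) l).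
    destruct (HG L) as [F HF].
    assert (Hc : forall x : W G, generated (fun x => In x l) x ->
              generated (fun x => In x L) (fst (fst x)) /\
              generated (fun x => In x L) (snd (fst x))).
    { intros x Hx. induction Hx as [x Hx| |x y _ [IH1 IH2] _ [IH3 IH4]|x _ [IH1 IH2]].
      - split; apply gen_in; unfold L; apply in_flat_map; exists x; simpl; auto.
      - simpl; split; apply gen_one.
      - destruct x as [[x1 x2] s]; destruct y as [[y1 y2] t]; simpl in *.
        destruct s; simpl; split; apply gen_mul; assumption.
      - destruct x as [[x1 x2] s]; simpl in *.
        destruct s; simpl; split; apply gen_inv; assumption. }
    exists (flat_map (fun u => flat_map (fun v => [((u,v),true);((u,v),false)]) F) F).
    intros x Hx. destruct (Hc x Hx) as [H1 H2].
    destruct x as [[x1 x2] s]; simpl in H1, H2.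
    apply in_flat_map. exists x1. split; [apply HF; auto|].
    apply in_flat_map. exists x2. split; [apply HF; auto|].
    destruct s; simpl; auto.
  - intros [[g h] s].
    assert (E : ((g,h),false) = wmul G (emb G g) (wmul G (aa G) (wmul G (emb G h) (aa G)))).
    { simpl. rewrite !gmul1g, !mulg1. reflexivity. }
    assert (Gf : generated (G:=W G) (fun y => (exists g, y = emb G g) \/ y = aa G) ((g,h),false)).
    { rewrite E. apply (gen_mul (W G)); [apply gen_in; left; eauto|].
      apply (gen_mul (W G)); [apply gen_in; right; auto|].
      apply (gen_mul (W G)); [apply gen_in; left; eauto|apply gen_in; right; auto]. }
    destruct s; [|exact Gf].
    assert (E2 : ((g,h),true) = wmul G ((g,h),false) (aa G)).
    { simpl. rewrite !mulg1. reflexivity. }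
    rewrite E2. change (wmul G (g, h, false) (aa G)) with (@gmul (W G) (g, h, false) (aa G)). apply (gen_mul (W G)); [exact Gf| apply gen_in; right; auto].
  - intros b Hb H. simpl in H. rewrite !gmul1g, !mulg1 in H. congruence.
  - simpl. unfold aa, wone. congruence.
  - simpl. rewrite !gmul1g. reflexivity.
  - intros g h. simpl. rewrite invg1, !gmul1g, !mulg1. reflexivity.
Qed.
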